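(* Let $(!, \delta, \varepsilon, \mathsf{m}, \mathsf{m}_K)$ be a symmetric monoidal comonad on a symmetric monoidal category $(\mathbb{X}, \otimes, K)$. Then the following are in bijective correspondence: (1) Cocommutative bimonoids in $(\mathbb{X}^!, \otimes^\mathsf{m}, (K, \mathsf{m}_K))$; (2) Cocommutative bimonoids $(A, \nabla, \mathsf{u}, \Delta, \mathsf{e})$ in $(\mathbb{X}, \otimes, K)$ equipped with a natural transformation $\lambda_X: A \otimes !(X) \to !(A \otimes X)$ such that $\lambda$ is a symmetric monoidal mixed distributive law of the symmetric comonoidal monad $(A \otimes -, \mu^\nabla, \eta^\mathsf{u}, \mathsf{n}^\Delta, \mathsf{n}^\mathsf{e}_K)$ over $(!, \delta, \varepsilon, \mathsf{m}, \mathsf{m}_K)$ and $\alpha_{A,!(X),!(Y)};(\lambda_X\otimes 1_{!(Y)});\mathsf{m}_{A\otimes X,Y} = (1_A\otimes \mathsf{m}_{X,Y});\lambda_{X\otimes Y};!(\alpha_{A,X,Y})$ as maps $A\otimes(!(X)\otimes !(Y))\to !((A\otimes X)\otimes Y)$.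
   Context: Composition is in diagrammatic order ($f;g$ = first $f$ then $g$); $\alpha,\ell,\rho,\sigma$ are the associator, left/right unitors and symmetry, and $\tau_{A,B,C,D}:(A\otimes B)\otimes(C\otimes D)\to(A\otimes C)\otimes(B\otimes D)$ is the canonical interchange isomorphism. A symmetric monoidal comonad $(!,\delta,\varepsilon,\mathsf{m},\mathsf{m}_K)$ is a comonad with symmetric lax monoidal structure $\mathsf{m}_{A,B}:!(A)\otimes!(B)\to!(A\otimes B)$, $\mathsf{m}_K:K\to!(K)$ for which $\delta,\varepsilon$ are monoidal; its Eilenberg-Moore category $\mathbb{X}^!$ of $!$-coalgebras is symmetric monoidal with $(A,\omega)\otimes^\mathsf{m}(B,\omega')=(A\otimes B,(\omega\otimes\omega');\mathsf{m}_{A,B})$ and unit $(K,\mathsf{m}_K)$. For a cocommutative bimonoid $(A,\nabla,\mathsf{u},\Delta,\mathsf{e})$ the symmetric comonoidal monad $A\otimes-$ has $\mu^\nabla_X=\alpha_{A,A,X};(\nabla\otimes 1_X)$, $\eta^\mathsf{u}_X=\ell^{-1}_X;(\mathsf{u}\otimes 1_X)$, $\mathsf{n}^\Delta_{X,Y}=(\Delta\otimes 1_{X\otimes Y});\tau_{A,A,X,Y}$, $\mathsf{n}^\mathsf{e}_K=\rho_A;\mathsf{e}$. A mixed distributive law of a monad $(\mathsf{T},\mu,\eta)$ over $(!,\delta,\varepsilon)$ is a natural $\lambda_X:\mathsf{T}!(X)\to!\mathsf{T}(X)$ with $\mu_{!(X)};\lambda_X=\mathsf{T}(\lambda_X);\lambda_{\mathsf{T}(X)};!(\mu_X)$,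 $\eta_{!(X)};\lambda_X=!(\eta_X)$, $\mathsf{T}(\delta_X);\lambda_{!(X)};!(\lambda_X)=\lambda_X;\delta_{\mathsf{T}(X)}$, $\lambda_X;\varepsilon_{\mathsf{T}(X)}=\mathsf{T}(\varepsilon_X)$; for a symmetric comonoidal monad $(\mathsf{T},\mu,\eta,\mathsf{n},\mathsf{n}_K)$ it is symmetric monoidal if also $\mathsf{n}_{!(X),!(Y)};(\lambda_X\otimes\lambda_Y);\mathsf{m}_{\mathsf{T}(X),\mathsf{T}(Y)}=\mathsf{T}(\mathsf{m}_{X,Y});\lambda_{X\otimes Y};!(\mathsf{n}_{X,Y})$ and $\mathsf{n}_K;\mathsf{m}_K=\mathsf{T}(\mathsf{m}_K);\lambda_K;!(\mathsf{n}_K)$. *)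

(* Defs.v *)
(* Equality of morphisms is Leibniz equality on hom-types.
   Composition is written in DIAGRAMMATIC order: [comp f g] = f ; g. *)

Record SMCData : Type := {
  ob : Type;
  hom : ob -> ob -> Type;
  idm : forall A : ob, hom A A;
  comp : forall A B C : ob, hom A B -> hom B C -> hom A C;
  tens : ob -> ob -> ob;
  tensm : forall A B C D : ob, hom A B -> hom C D -> hom (tens A C) (tens B D);
  unit : ob;
  alpha : forall A B C : ob, hom (tens A (tens B C)) (tens (tens A B) C);
  alpha_inv : forall A B C : ob, hom (tens (tens A B) C) (tens A (tens B C));
  ell : forall A : ob, hom (tens unit A) A;
  ell_inv : forall A : ob, hom A (tens unit A);
  rho : forall A : ob, hom (tens A unit) A;
  rho_inv : forall A : ob, hom A (tens A unit);
  sigma : forall A B : ob, hom (tens A B) (tens B A)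
}.

Arguments hom {s} _ _.
Arguments idm {s} _.
Arguments comp {s A B C} _ _.
Arguments tens {s} _ _.
Arguments tensm {s A B C D} _ _.
Arguments unit {s}.
Arguments alpha {s} _ _ _.
Arguments alpha_inv {s} _ _ _.
Arguments ell {s} _.
Arguments ell_inv {s} _.
Arguments rho {s} _.
Arguments rho_inv {s} _.
Arguments sigma {s} _ _.

Declare Scope cat_scope.
Delimit Scope cat_scope with cat.
Open Scope cat_scope.
Notation "f ;; g" := (comp f g) (at level 40, left associativity) : cat_scope.
Notation "A ⊗ B" := (tens A B) (at level 30, right associativity) : cat_scope.
Notation "f ⊠ g" := (tensm f g) (at level 30, right associativity) : cat_scope.

Definition SMC_axioms (C : SMCData) : Prop :=
  (forall (A B : ob C) (f : hom A B), idm A ;; f = f) /\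
  (forall (A B : ob C) (f : hom A B), f ;; idm B = f) /\
  (forall (A B D E : ob C) (f : hom A B) (g : hom B D) (h : hom D E),
      (f ;; g) ;; h = f ;; (g ;; h)) /\
  (forall A B : ob C, idm A ⊠ idm B = idm (A ⊗ B)) /\
  (forall (A1 A2 A3 B1 B2 B3 : ob C) (f : hom A1 A2) (g : hom A2 A3)
          (f' : hom B1 B2) (g' : hom B2 B3),
      (f ;; g) ⊠ (f' ;; g') = (f ⊠ f') ;; (g ⊠ g')) /\
  (forall A B D : ob C, alpha A B D ;; alpha_inv A B D = idm _) /\
  (forall A B D : ob C, alpha_inv A B D ;; alpha A B D = idm _) /\
  (forall (A A' B B' D D' : ob C) (f : hom A A') (g : hom B B') (h : hom D D'),
      (f ⊠ (g ⊠ h)) ;; alpha A' B' D' = alpha A B D ;; ((f ⊠ g) ⊠ h)) /\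
  (forall A : ob C, ell A ;; ell_inv A = idm _) /\
  (forall A : ob C, ell_inv A ;; ell A = idm _) /\
  (forall (A A' : ob C) (f : hom A A'), (idm unit ⊠ f) ;; ell A' = ell A ;; f) /\
  (forall A : ob C, rho A ;; rho_inv A = idm _) /\
  (forall A : ob C, rho_inv A ;; rho A = idm _) /\
  (forall (A A' : ob C) (f : hom A A'), (f ⊠ idm unit) ;; rho A' = rho A ;; f) /\
  (forall (A A' B B' : ob C) (f : hom A A') (g : hom B B'),
      (f ⊠ g) ;; sigma A' B' = sigma A B ;; (g ⊠ f)) /\
  (forall A B : ob C, sigma A B ;; sigma B A = idm _) /\
  (forall A B D E : ob C,
      alpha A B (D ⊗ E) ;; alpha (A ⊗ B) D E
      = (idm A ⊠ alpha B D E) ;; alpha A (B ⊗ D) E ;; (alpha A B D ⊠ idm E)) /\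
  (forall A B : ob C,
      alpha A unit B ;; (rho A ⊠ idm B) = idm A ⊠ ell B) /\
  (forall A B D : ob C,
      alpha A B D ;; sigma (A ⊗ B) D ;; alpha D A B
      = (idm A ⊠ sigma B D) ;; alpha A D B ;; (sigma A D ⊠ idm B)).

Record SMC : Type := {
  smc_data :> SMCData;
  smc_ax : SMC_axioms smc_data
}.

Section Comonad.
Variable C : SMC.

Definition tau (A B D E : ob C) : hom ((A ⊗ B) ⊗ (D ⊗ E)) ((A ⊗ D) ⊗ (B ⊗ E)) :=
  alpha_inv A B (D ⊗ E) ;; (idm A ⊠ alpha B D E)
  ;; (idm A ⊠ (sigma B D ⊠ idm E)) ;; (idm A ⊠ alpha_inv D B E)
  ;; alpha A D (B ⊗ E).

Record ComonadData : Type := {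
  bang : ob C -> ob C;
  bmap : forall A B : ob C, hom A B -> hom (bang A) (bang B);
  delta : forall A : ob C, hom (bang A) (bang (bang A));
  eps : forall A : ob C, hom (bang A) A;
  mm : forall A B : ob C, hom (bang A ⊗ bang B) (bang (A ⊗ B));
  mK : hom (@unit C) (bang unit)
}.

Definition SMComonad_axioms (B : ComonadData) : Prop :=
  let b := bang B in
  let bm := bmap B in
  (forall A : ob C, bm A A (idm A) = idm (b A)) /\
  (forall (A1 A2 A3 : ob C) (f : hom A1 A2) (g : hom A2 A3),
      bm _ _ (f ;; g) = bm _ _ f ;; bm _ _ g) /\
  (forall (A A' : ob C) (f : hom A A'),
      bm _ _ f ;; delta B A' = delta B A ;; bm _ _ (bm _ _ f)) /\
  (forall (A A' : ob C) (f : hom A A'), bm _ _ f ;; eps B A' = eps B A ;; f) /\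
  (forall A : ob C, delta B A ;; eps B (b A) = idm (b A)) /\
  (forall A : ob C, delta B A ;; bm _ _ (eps B A) = idm (b A)) /\
  (forall A : ob C, delta B A ;; delta B (b A) = delta B A ;; bm _ _ (delta B A)) /\
  (forall (A A' D D' : ob C) (f : hom A A') (g : hom D D'),
      (bm _ _ f ⊠ bm _ _ g) ;; mm B A' D' = mm B A D ;; bm _ _ (f ⊠ g)) /\
  (forall A D E : ob C,
      alpha (b A) (b D) (b E) ;; (mm B A D ⊠ idm (b E)) ;; mm B (A ⊗ D) E
      = (idm (b A) ⊠ mm B D E) ;; mm B A (D ⊗ E) ;; bm _ _ (alpha A D E)) /\
  (forall A : ob C,
      ell (b A) = (mK B ⊠ idm (b A)) ;; mm B unit A ;; bm _ _ (ell A)) /\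
  (forall A : ob C,
      rho (b A) = (idm (b A) ⊠ mK B) ;; mm B A unit ;; bm _ _ (rho A)) /\
  (forall A D : ob C,
      sigma (b A) (b D) ;; mm B D A = mm B A D ;; bm _ _ (sigma A D)) /\
  (forall A D : ob C,
      mm B A D ;; delta B (A ⊗ D)
      = (delta B A ⊠ delta B D) ;; mm B (b A) (b D) ;; bm _ _ (mm B A D)) /\
  (mK B ;; delta B unit = mK B ;; bm _ _ (mK B)) /\
  (forall A D : ob C, mm B A D ;; eps B (A ⊗ D) = eps B A ⊠ eps B D) /\
  (mK B ;; eps B unit = idm unit).

Record SMComonad : Type := {
  cmd_data :> ComonadData;
  cmd_ax : SMComonad_axioms cmd_data
}.

End Comonad.

Arguments bang {C} _ _.
Arguments bmap {C} _ {A B} _.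
Arguments delta {C} _ _.
Arguments eps {C} _ _.
Arguments mm {C} _ _ _.
Arguments mK {C} _.

Section Bimonoids.
Variable C : SMC.

Definition is_cocomm_bimonoid (A : ob C) (nabla : hom (A ⊗ A) A) (u : hom unit A)
    (Delta : hom A (A ⊗ A)) (e : hom A unit) : Prop :=
  ((idm A ⊠ nabla) ;; nabla = alpha A A A ;; (nabla ⊠ idm A) ;; nabla) /\
  (ell_inv A ;; (u ⊠ idm A) ;; nabla = idm A) /\
  (rho_inv A ;; (idm A ⊠ u) ;; nabla = idm A) /\
  (Delta ;; (idm A ⊠ Delta) ;; alpha A A A = Delta ;; (Delta ⊠ idm A)) /\
  (Delta ;; (e ⊠ idm A) ;; ell A = idm A) /\
  (Delta ;; (idm A ⊠ e) ;; rho A = idm A) /\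
  (nabla ;; Delta = (Delta ⊠ Delta) ;; tau C A A A A ;; (nabla ⊠ nabla)) /\
  (u ;; Delta = ell_inv unit ;; (u ⊠ u)) /\
  (nabla ;; e = (e ⊠ e) ;; ell unit) /\
  (u ;; e = idm unit) /\
  (Delta ;; sigma A A = Delta).

Definition underlying_bimonoid : Type :=
  { A : ob C & (hom (A ⊗ A) A * hom unit A * hom A (A ⊗ A) * hom A unit)%type }.

End Bimonoids.
Arguments is_cocomm_bimonoid {C A} nabla u Delta e.

Section Correspondence.
Variable C : SMC.
Variable B : SMComonad C.

Local Notation "! A" := (bang B A) (at level 20).
Local Notation "!! f" := (bmap B f) (at level 20).

(* (1) Cocommutative bimonoids in the Eilenberg-Moore category X^! with the *)
(* monoidal structure (A,w) (x)^m (B,w') = (A ⊗ B, (w ⊗ w') ; m) and     *)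
(* unit (K, m_K).  Since composition, tensor and coherence maps of X^! are   *)
(* those of X, such a bimonoid is a !-coalgebra (A, w) together with a       *)
(* cocommutative bimonoid structure on A in X whose four structure maps are  *)
(* coalgebra morphisms.                                                      *)

Definition is_coalgebra (A : ob C) (w : hom A (!A)) : Prop :=
  w ;; eps B A = idm A /\ w ;; delta B A = w ;; !! w.

Definition is_coalg_morph (A A' : ob C) (w : hom A (!A)) (w' : hom A' (!A'))
    (f : hom A A') : Prop :=
  f ;; w' = w ;; !! f.
Arguments is_coalg_morph {A A'} w w' f.

Definition tens_coalg (A A' : ob C) (w : hom A (!A)) (w' : hom A' (!A'))
  : hom (A ⊗ A') (!(A ⊗ A')) := (w ⊠ w') ;; mm B A A'.
Arguments tens_coalg {A A'} w w'.

Record CoalgBimonoid : Type := {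
  cb_ob : ob C;
  cb_coalg : hom cb_ob (!cb_ob);
  cb_nabla : hom (cb_ob ⊗ cb_ob) cb_ob;
  cb_unit : hom unit cb_ob;
  cb_Delta : hom cb_ob (cb_ob ⊗ cb_ob);
  cb_counit : hom cb_ob unit;
  cb_is_coalg : is_coalgebra cb_ob cb_coalg;
  cb_nabla_morph : is_coalg_morph (tens_coalg cb_coalg cb_coalg) cb_coalg cb_nabla;
  cb_unit_morph : is_coalg_morph (mK B) cb_coalg cb_unit;
  cb_Delta_morph : is_coalg_morph cb_coalg (tens_coalg cb_coalg cb_coalg) cb_Delta;
  cb_counit_morph : is_coalg_morph cb_coalg (mK B) cb_counit;
  cb_bimonoid : is_cocomm_bimonoid cb_nabla cb_unit cb_Delta cb_counit
}.

Definition cb_underlying (x : CoalgBimonoid) : underlying_bimonoid C :=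
  existT _ (cb_ob x) (cb_nabla x, cb_unit x, cb_Delta x, cb_counit x).

Section MonadOfBimonoid.
Variables (A : ob C) (nabla : hom (A ⊗ A) A) (u : hom unit A)
          (Delta : hom A (A ⊗ A)) (e : hom A unit).

Definition mu_nabla (X : ob C) : hom (A ⊗ (A ⊗ X)) (A ⊗ X) :=
  alpha A A X ;; (nabla ⊠ idm X).
Definition eta_u (X : ob C) : hom X (A ⊗ X) :=
  ell_inv X ;; (u ⊠ idm X).
Definition n_Delta (X Y : ob C) : hom (A ⊗ (X ⊗ Y)) ((A ⊗ X) ⊗ (A ⊗ Y)) :=
  (Delta ⊠ idm (X ⊗ Y)) ;; tau C A A X Y.
Definition n_e : hom (A ⊗ unit) unit := rho A ;; e.

Variable lam : forall X : ob C, hom (A ⊗ !X) (!(A ⊗ X)).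

Definition is_natural_lam : Prop :=
  forall (X Y : ob C) (f : hom X Y),
    (idm A ⊠ !! f) ;; lam Y = lam X ;; !! (idm A ⊠ f).

Definition is_mixed_distributive_law : Prop :=
  is_natural_lam /\
  (forall X : ob C,
      mu_nabla (!X) ;; lam X
      = (idm A ⊠ lam X) ;; lam (A ⊗ X) ;; !! (mu_nabla X)) /\
  (forall X : ob C, eta_u (!X) ;; lam X = !! (eta_u X)) /\
  (forall X : ob C,
      (idm A ⊠ delta B X) ;; lam (!X) ;; !! (lam X) = lam X ;; delta B (A ⊗ X)) /\
  (forall X : ob C, lam X ;; eps B (A ⊗ X) = idm A ⊠ eps B X).

Definition is_sym_monoidal_mixed_distributive_law : Prop :=
  is_mixed_distributive_law /\
  (forall X Y : ob C,
      n_Delta (!X) (!Y) ;; (lam X ⊠ lam Y) ;; mm B (A ⊗ X) (A ⊗ Y)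
      = (idm A ⊠ mm B X Y) ;; lam (X ⊗ Y) ;; !! (n_Delta X Y)) /\
  (n_e ;; mK B = (idm A ⊠ mK B) ;; lam unit ;; !! n_e).

Definition lam_alpha_compat : Prop :=
  forall X Y : ob C,
    alpha A (!X) (!Y) ;; (lam X ⊠ idm (!Y)) ;; mm B (A ⊗ X) Y
    = (idm A ⊠ mm B X Y) ;; lam (X ⊗ Y) ;; !! (alpha A X Y).

End MonadOfBimonoid.
Arguments is_sym_monoidal_mixed_distributive_law {A} nabla u Delta e lam.
Arguments lam_alpha_compat {A} lam.

Record DistBimonoid : Type := {
  db_ob : ob C;
  db_nabla : hom (db_ob ⊗ db_ob) db_ob;
  db_unit : hom unit db_ob;
  db_Delta : hom db_ob (db_ob ⊗ db_ob);
  db_counit : hom db_ob unit;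
  db_lam : forall X : ob C, hom (db_ob ⊗ !X) (!(db_ob ⊗ X));
  db_bimonoid : is_cocomm_bimonoid db_nabla db_unit db_Delta db_counit;
  db_law : is_sym_monoidal_mixed_distributive_law db_nabla db_unit db_Delta db_counit db_lam;
  db_alpha : lam_alpha_compat db_lam
}.

Definition db_underlying (y : DistBimonoid) : underlying_bimonoid C :=
  existT _ (db_ob y) (db_nabla y, db_unit y, db_Delta y, db_counit y).

End Correspondence.

Arguments CoalgBimonoid {C} B.
Arguments DistBimonoid {C} B.
Arguments cb_underlying {C B} x.
Arguments db_underlying {C B} y.

(* Main.v *)
Require Import Defs.
From Stdlib Require Import ssreflect FunctionalExtensionality ProofIrrelevance.

Section Coh.
Variable C : SMC.

Let AX := smc_ax C.

Lemma idl {A B : ob C} (f : hom A B) : idm A ;; f = f.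
Proof. destruct AX as (a1&_). apply a1. Qed.
Lemma idr {A B : ob C} (f : hom A B) : f ;; idm B = f.
Proof. destruct AX as (_&a&_). apply a. Qed.
Lemma cA {A B D E : ob C} {f : hom A B} {g : hom B D} {h : hom D E} : (f ;; g) ;; h = f ;; (g ;; h).
Proof. destruct AX as (_&_&a&_). apply a. Qed.
Lemma tid {A B : ob C} : idm A ⊠ idm B = idm (A ⊗ B).
Proof. destruct AX as (_&_&_&a&_). apply a. Qed.
Lemma tcomp {A1 A2 A3 B1 B2 B3 : ob C} {f : hom A1 A2} {g : hom A2 A3} {f' : hom B1 B2} {g' : hom B2 B3} :
  (f ;; g) ⊠ (f' ;; g') = (f ⊠ f') ;; (g ⊠ g').
Proof. destruct AX as (_&_&_&_&a&_). apply a. Qed.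
Lemma aai {A B D : ob C} : alpha A B D ;; alpha_inv A B D = idm _.
Proof. destruct AX as (_&_&_&_&_&a&_). apply a. Qed.
Lemma aia {A B D : ob C} : alpha_inv A B D ;; alpha A B D = idm _.
Proof. destruct AX as (_&_&_&_&_&_&a&_). apply a. Qed.
Lemma anat {A A' B B' D D' : ob C} {f : hom A A'} {g : hom B B'} {h : hom D D'} :
  (f ⊠ (g ⊠ h)) ;; alpha A' B' D' = alpha A B D ;; ((f ⊠ g) ⊠ h).
Proof. destruct AX as (_&_&_&_&_&_&_&a&_). apply a. Qed.
Lemma lli {A : ob C} : ell A ;; ell_inv A = idm _.
Proof. destruct AX as (_&_&_&_&_&_&_&_&a&_). apply a. Qed.
Lemma lil {A : ob C} : ell_inv A ;; ell A = idm _.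
Proof. destruct AX as (_&_&_&_&_&_&_&_&_&a&_). apply a. Qed.
Lemma lnat {A A' : ob C} {f : hom A A'} : (idm unit ⊠ f) ;; ell A' = ell A ;; f.
Proof. destruct AX as (_&_&_&_&_&_&_&_&_&_&a&_). apply a. Qed.
Lemma rri {A : ob C} : rho A ;; rho_inv A = idm _.
Proof. destruct AX as (_&_&_&_&_&_&_&_&_&_&_&a&_). apply a. Qed.
Lemma rir {A : ob C} : rho_inv A ;; rho A = idm _.
Proof. destruct AX as (_&_&_&_&_&_&_&_&_&_&_&_&a&_). apply a. Qed.
Lemma rnat {A A' : ob C} {f : hom A A'} : (f ⊠ idm unit) ;; rho A' = rho A ;; f.
Proof. destruct AX as (_&_&_&_&_&_&_&_&_&_&_&_&_&a&_). apply a. Qed.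
Lemma snat {A A' B B' : ob C} {f : hom A A'} {g : hom B B'} :
  (f ⊠ g) ;; sigma A' B' = sigma A B ;; (g ⊠ f).
Proof. destruct AX as (_&_&_&_&_&_&_&_&_&_&_&_&_&_&a&_). apply a. Qed.
Lemma ss {A B : ob C} : sigma A B ;; sigma B A = idm _.
Proof. destruct AX as (_&_&_&_&_&_&_&_&_&_&_&_&_&_&_&a&_). apply a. Qed.
Lemma pent {A B D E : ob C} :
      alpha A B (D ⊗ E) ;; alpha (A ⊗ B) D E
      = (idm A ⊠ alpha B D E) ;; alpha A (B ⊗ D) E ;; (alpha A B D ⊠ idm E).
Proof. destruct AX as (_&_&_&_&_&_&_&_&_&_&_&_&_&_&_&_&a&_). apply a. Qed.
Lemma tri {A B : ob C} : alpha A unit B ;; (rho A ⊠ idm B) = idm A ⊠ ell B.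
Proof. destruct AX as (_&_&_&_&_&_&_&_&_&_&_&_&_&_&_&_&_&a&_). apply a. Qed.
Lemma hex {A B D : ob C} :
      alpha A B D ;; sigma (A ⊗ B) D ;; alpha D A B
      = (idm A ⊠ sigma B D) ;; alpha A D B ;; (sigma A D ⊠ idm B).
Proof. destruct AX as (_&_&_&_&_&_&_&_&_&_&_&_&_&_&_&_&_&_&a). apply a. Qed.

Lemma c2 {A B D E : ob C} {f : hom A B} {g : hom B D} {h : hom A D} :
  f ;; g = h -> forall r : hom D E, f ;; (g ;; r) = h ;; r.
Proof. intros H r. rewrite -cA H. reflexivity. Qed.
Lemma c3 {A B D E F : ob C} {f : hom A B} {g : hom B D} {k : hom D E} {h : hom A E} :
  f ;; (g ;; k) = h -> forall r : hom E F, f ;; (g ;; (k ;; r)) = h ;; r.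
Proof. intros H0 r. rewrite -H0 !cA. reflexivity. Qed.
Lemma c4 {A B D E F G : ob C} {f : hom A B} {g : hom B D} {k : hom D E} {l : hom E F} {h : hom A F} :
  f ;; (g ;; (k ;; l)) = h -> forall r : hom F G, f ;; (g ;; (k ;; (l ;; r))) = h ;; r.
Proof. intros H0 r. rewrite -H0 !cA. reflexivity. Qed.
Lemma c5 {A B D E F G H : ob C} {f : hom A B} {g : hom B D} {k : hom D E} {l : hom E F} {m : hom F G} {h : hom A G} :
  f ;; (g ;; (k ;; (l ;; m))) = h -> forall r : hom G H, f ;; (g ;; (k ;; (l ;; (m ;; r)))) = h ;; r.
Proof. intros E0 r. rewrite -E0 !cA. reflexivity. Qed.



Tactic Notation "rw" uconstr(E) := first [ rewrite E | rewrite (c2 E) | rewrite (c3 E) | rewrite (c4 E) | rewrite (c5 E) ]; rewrite ?cA.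
Tactic Notation "rw" uconstr(E) "in" hyp(H) := first [ rewrite E in H | rewrite (c2 E) in H | rewrite (c3 E) in H | rewrite (c4 E) in H | rewrite (c5 E) in H ]; rewrite ?cA in H.
Tactic Notation "rwr" uconstr(E) := first [ rewrite -E | rewrite (c2 (eq_sym E)) | rewrite (c3 (eq_sym E)) | rewrite (c4 (eq_sym E)) | rewrite (c5 (eq_sym E)) ]; rewrite ?cA.

Lemma pentN {A B D E : ob C} :
      alpha A B (D ⊗ E) ;; alpha (A ⊗ B) D E
      = (idm A ⊠ alpha B D E) ;; (alpha A (B ⊗ D) E ;; (alpha A B D ⊠ idm E)).
Proof. rewrite pent cA. reflexivity. Qed.
Lemma hexN {A B D : ob C} :
      alpha A B D ;; (sigma (A ⊗ B) D ;; alpha D A B)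
      = (idm A ⊠ sigma B D) ;; (alpha A D B ;; (sigma A D ⊠ idm B)).
Proof. rewrite -cA hex cA. reflexivity. Qed.

Lemma tL {A1 A2 A3 B : ob C} {f : hom A1 A2} {g : hom A2 A3} : (f ⊠ idm B) ;; (g ⊠ idm B) = (f ;; g) ⊠ idm B.
Proof. rewrite -tcomp idl. reflexivity. Qed.
Lemma tR {A1 A2 A3 B : ob C} {f : hom A1 A2} {g : hom A2 A3} : (idm B ⊠ f) ;; (idm B ⊠ g) = idm B ⊠ (f ;; g).
Proof. rewrite -tcomp idl. reflexivity. Qed.
Lemma x1 {A A' B B' : ob C} {f : hom A A'} {g : hom B B'} : (f ⊠ idm B) ;; (idm A' ⊠ g) = f ⊠ g.
Proof. rewrite -tcomp idl idr. reflexivity. Qed.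
Lemma x2 {A A' B B' : ob C} {f : hom A A'} {g : hom B B'} : (idm A ⊠ g) ;; (f ⊠ idm B') = f ⊠ g.
Proof. rewrite -tcomp idl idr. reflexivity. Qed.
Lemma sl {A A' B B' : ob C} {f : hom A A'} {g : hom B B'} : f ⊠ g = (f ⊠ idm B) ;; (idm A' ⊠ g).
Proof. rewrite x1. reflexivity. Qed.
Lemma sr {A A' B B' : ob C} {f : hom A A'} {g : hom B B'} : f ⊠ g = (idm A ⊠ g) ;; (f ⊠ idm B').
Proof. rewrite x2. reflexivity. Qed.
Lemma xc {A A' B B' : ob C} {f : hom A A'} {g : hom B B'} : (f ⊠ idm B) ;; (idm A' ⊠ g) = (idm A ⊠ g) ;; (f ⊠ idm B').
Proof. rewrite x1 x2. reflexivity. Qed.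

Lemma iso_r {A B D : ob C} (f : hom B D) (fi : hom D B) (g h : hom A B) :
  f ;; fi = idm B -> g ;; f = h ;; f -> g = h.
Proof. intros E H. rewrite -(idr g) -(idr h) -E -!cA H. reflexivity. Qed.
Lemma iso_l {A B D : ob C} (f : hom A B) (fi : hom B A) (g h : hom B D) :
  fi ;; f = idm B -> f ;; g = f ;; h -> g = h.
Proof. intros E H. rewrite -(idl g) -(idl h) -E !cA H. reflexivity. Qed.

Lemma ainat {A A' B B' D D' : ob C} {f : hom A A'} {g : hom B B'} {h : hom D D'} :
  ((f ⊠ g) ⊠ h) ;; alpha_inv A' B' D' = alpha_inv A B D ;; (f ⊠ (g ⊠ h)).
Proof.
  apply (iso_r (alpha A' B' D') _ _ _ aai). rewrite !cA aia idr. rewrite anat -cA aia idl. reflexivity.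
Qed.
Lemma linat {A A' : ob C} {f : hom A A'} : f ;; ell_inv A' = ell_inv A ;; (idm unit ⊠ f).
Proof.
  apply (iso_r (ell A') _ _ _ lli). rewrite !cA lil idr lnat -cA lil idl. reflexivity.
Qed.
Lemma rinat {A A' : ob C} {f : hom A A'} : f ;; rho_inv A' = rho_inv A ;; (f ⊠ idm unit).
Proof.
  apply (iso_r (rho A') _ _ _ rri). rewrite !cA rir idr rnat -cA rir idl. reflexivity.
Qed.
Lemma cancel_r1 {A B : ob C} (f g : hom A B) : f ⊠ idm unit = g ⊠ idm unit -> f = g.
Proof.
  intros H. rewrite -(idl f) -(idl g) -rir !cA -!rnat H. reflexivity.
Qed.
Lemma cancel_l1 {A B : ob C} (f g : hom A B) : idm unit ⊠ f = idm unit ⊠ g -> f = g.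
Proof.
  intros H. rewrite -(idl f) -(idl g) -lil !cA -!lnat H. reflexivity.
Qed.
Lemma tinv {A B A' B' : ob C} {f : hom A B} {fi : hom B A} {g : hom A' B'} {gi : hom B' A'} :
  f ;; fi = idm A -> g ;; gi = idm A' -> (f ⊠ g) ;; (fi ⊠ gi) = idm _.
Proof. intros E1 E2. rewrite -tcomp E1 E2 tid. reflexivity. Qed.

Lemma tri_inv {A B : ob C} : (idm A ⊠ ell_inv B) ;; alpha A unit B = rho_inv A ⊠ idm B.
Proof.
  apply (iso_r (rho A ⊠ idm B) (rho_inv A ⊠ idm B) _ _ (tinv rri (idr _))).
  rewrite cA tri tR lil tid. rewrite tL rir tid. reflexivity.
Qed.

Lemma anat3 {A B D D' : ob C} {h : hom D D'} : alpha A B D ;; (idm (A ⊗ B) ⊠ h) = (idm A ⊠ (idm B ⊠ h)) ;; alpha A B D'.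
Proof. rewrite anat tid. reflexivity. Qed.
Lemma anat1 {A A' B D : ob C} {f : hom A A'} : alpha A B D ;; ((f ⊠ idm B) ⊠ idm D) = (f ⊠ idm (B ⊗ D)) ;; alpha A' B D.
Proof. rewrite -tid anat. reflexivity. Qed.
Lemma ainat3 {A B D D' : ob C} {h : hom D D'} : (idm (A ⊗ B) ⊠ h) ;; alpha_inv A B D' = alpha_inv A B D ;; (idm A ⊠ (idm B ⊠ h)).
Proof. rewrite -tid ainat. reflexivity. Qed.
Lemma ainat1 {A A' B D : ob C} {f : hom A A'} : ((f ⊠ idm B) ⊠ idm D) ;; alpha_inv A' B D = alpha_inv A B D ;; (f ⊠ idm (B ⊗ D)).
Proof. rewrite -tid ainat. reflexivity. Qed.

Lemma R1 {A B : ob C} : alpha A B unit ;; rho (A ⊗ B) = idm A ⊠ rho B.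
Proof.
  apply cancel_r1.
  set P := (idm A ⊠ alpha B unit unit) ;; alpha A (B ⊗ unit) unit.
  have Pi : (alpha_inv A (B ⊗ unit) unit ;; (idm A ⊠ alpha_inv B unit unit)) ;; P = idm _.
  { rewrite /P !cA. rw tR. rewrite aia tid idl aia. reflexivity. }
  apply (iso_l P _ _ _ Pi).
  rewrite /P -tL !cA.
  rwr pentN. rw tri. rw anat3. rewrite -tri -tR !cA. rw anat. reflexivity.
Qed.

Lemma L1 {A B : ob C} : alpha unit A B ;; (ell A ⊠ idm B) = ell (A ⊗ B).
Proof.
  apply cancel_l1. apply (iso_r (alpha unit A B) _ _ _ aai).
  rewrite -tR !cA. rw anat. rewrite -tri -tL ?cA. rwr pentN. rw anat1. rw tri. reflexivity.
Qed.

Lemma ellK : ell (@unit C) = rho unit.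
Proof.
  apply cancel_r1. apply (iso_l (alpha unit unit unit) (alpha_inv _ _ _) _ _ aia).
  rewrite L1 tri. apply (iso_r (ell unit) _ _ _ lli). rewrite lnat. reflexivity.
Qed.

Lemma S1 {D : ob C} : sigma unit D ;; rho D = ell D.
Proof.
  set phi := ell_inv D ;; (sigma unit D ;; rho D).
  have H : sigma unit D = (idm unit ⊠ phi) ;; sigma unit D.
  { have E := @hexN unit unit D.
    have E2 := f_equal (fun z => (idm unit ⊠ ell_inv D) ;; (z ;; rho (D ⊗ unit))) E.
    simpl in E2. rewrite !cA in E2.
    rw tri_inv in E2. rw snat in E2. rw R1 in E2. rw tR in E2. rewrite rir tid idr in E2.
    rewrite {1}E2. rw rnat. rw R1. rw tR. rw tR. reflexivity. }
  have H2 : idm unit ⊠ phi = idm _.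
  { rewrite -(idr (idm unit ⊠ phi)) -(@ss unit D) -cA -H. reflexivity. }
  rewrite -tid in H2. apply cancel_l1 in H2.
  rewrite -(idl (sigma unit D ;; rho D)) -lli cA. rewrite /phi in H2. rewrite H2 idr. reflexivity.
Qed.

Lemma S2 {D : ob C} : sigma D unit ;; ell D = rho D.
Proof. rewrite -S1 -cA ss idl. reflexivity. Qed.

Lemma tf1 {A A' B B' D : ob C} {f : hom A A'} {g : hom B B'} {h : hom A' D} : (f ⊠ g) ;; (h ⊠ idm B') = (f ;; h) ⊠ g.
Proof. rewrite -tcomp idr. reflexivity. Qed.
Lemma tf2 {A A' B B' D : ob C} {f : hom A A'} {g : hom B B'} {h : hom B' D} : (f ⊠ g) ;; (idm A' ⊠ h) = f ⊠ (g ;; h).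
Proof. rewrite -tcomp idr. reflexivity. Qed.
Lemma tf3 {A A' B B' D : ob C} {f : hom A A'} {g : hom B B'} {h : hom D B} : (idm A ⊠ h) ;; (f ⊠ g) = f ⊠ (h ;; g).
Proof. rewrite -tcomp idl. reflexivity. Qed.
Lemma tf4 {A A' B B' D : ob C} {f : hom A A'} {g : hom B B'} {h : hom D A} : (h ⊠ idm B) ;; (f ⊠ g) = (h ;; f) ⊠ g.
Proof. rewrite -tcomp idl. reflexivity. Qed.

Lemma sn1 {A A' B B' D D' : ob C} {g : hom A A'} {h : hom B B'} {k : hom D D'} :
  ((g ⊠ h) ⊠ k) ;; (sigma A' B' ⊠ idm D') = (sigma A B ⊠ idm D) ;; ((h ⊠ g) ⊠ k).
Proof. rewrite -!tcomp !idl !idr snat. reflexivity. Qed.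

Lemma tau_nat {A A' B B' D D' E E' : ob C} {f : hom A A'} {g : hom B B'} {h : hom D D'} {k : hom E E'} :
  ((f ⊠ g) ⊠ (h ⊠ k)) ;; tau C A' B' D' E' = tau C A B D E ;; ((f ⊠ h) ⊠ (g ⊠ k)).
Proof.
  rewrite /tau !cA. rw ainat. rw tf2. rw tf2. rw tf2. rwr anat. rw tR. rw tR. rw tf3.
  congr (_ ;; (_ ⊠ _ ;; _)).
  rw anat. rw sn1. rw ainat. reflexivity.
Qed.

Lemma R1i {A B : ob C} : alpha_inv A B unit ;; (idm A ⊠ rho B) = rho (A ⊗ B).
Proof. rewrite -R1 -cA aia idl. reflexivity. Qed.
Lemma R1inv {A B : ob C} : rho_inv (A ⊗ B) = (idm A ⊠ rho_inv B) ;; alpha A B unit.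
Proof.
  apply (iso_r (rho (A ⊗ B)) (rho_inv _) _ _ rri). rewrite rir cA R1 tR rir tid. reflexivity.
Qed.
Lemma L1i {A B : ob C} : alpha_inv unit A B ;; ell (A ⊗ B) = ell A ⊠ idm B.
Proof. rewrite -L1 -cA aia idl. reflexivity. Qed.
Lemma ellKi : ell_inv (@unit C) = rho_inv unit.
Proof.
  apply (iso_r (ell unit) (ell_inv _) _ _ lli). rewrite lil ellK rir. reflexivity.
Qed.
Lemma Phi {A B : ob C} :
  rho (A ⊗ B) = (idm (A ⊗ B) ⊠ rho_inv unit) ;; (tau C A B unit unit ;; (rho A ⊠ rho B)).
Proof.
  rewrite /tau !cA (@sl _ _ _ _ (rho A) (rho B)). rw tri. rw tR. rw tR. rw tR. rw L1i. rw tL. rewrite S2. rw tR. rw tri.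
  rw ainat3. rw tR. rw tR. rewrite ellK rir tid idl R1i. reflexivity.
Qed.
Lemma Phii {A B : ob C} :
  rho_inv (A ⊗ B) ;; ((idm (A ⊗ B) ⊠ rho_inv unit) ;; tau C A B unit unit) = rho_inv A ⊠ rho_inv B.
Proof.
  apply (iso_r (rho A ⊠ rho B) (rho_inv A ⊠ rho_inv B) _ _ (tinv rri rri)).
  have E := @Phi A B. move: E. generalize (tau C A B unit unit). intros t E. rewrite !cA -E rir -tcomp !rir tid. reflexivity.
Qed.

Variable B : SMComonad C.
Let BX := cmd_ax C B.

Lemma bid {A : ob C} : bmap B (idm A) = idm (bang B A).
Proof. destruct BX as (a&_). apply a. Qed.
Lemma bcomp {A1 A2 A3 : ob C} {f : hom A1 A2} {g : hom A2 A3} : bmap B (f ;; g) = bmap B f ;; bmap B g.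
Proof. destruct BX as (_&a&_). apply a. Qed.
Lemma dnat {A A' : ob C} {f : hom A A'} : bmap B f ;; delta B A' = delta B A ;; bmap B (bmap B f).
Proof. destruct BX as (_&_&a&_). apply a. Qed.
Lemma enat {A A' : ob C} {f : hom A A'} : bmap B f ;; eps B A' = eps B A ;; f.
Proof. destruct BX as (_&_&_&a&_). apply a. Qed.
Lemma de {A : ob C} : delta B A ;; eps B (bang B A) = idm _.
Proof. destruct BX as (_&_&_&_&a&_). apply a. Qed.
Lemma dbe {A : ob C} : delta B A ;; bmap B (eps B A) = idm _.
Proof. destruct BX as (_&_&_&_&_&a&_). apply a. Qed.
Lemma dd {A : ob C} : delta B A ;; delta B (bang B A) = delta B A ;; bmap B (delta B A).
Proof. destruct BX as (_&_&_&_&_&_&a&_). apply a. Qed.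
Lemma mnat {A A' D D' : ob C} {f : hom A A'} {g : hom D D'} :
  (bmap B f ⊠ bmap B g) ;; mm B A' D' = mm B A D ;; bmap B (f ⊠ g).
Proof. destruct BX as (_&_&_&_&_&_&_&a&_). apply a. Qed.
Lemma massoc {A D E : ob C} :
  alpha _ _ _ ;; ((mm B A D ⊠ idm (bang B E)) ;; mm B (A ⊗ D) E)
  = (idm (bang B A) ⊠ mm B D E) ;; (mm B A (D ⊗ E) ;; bmap B (alpha A D E)).
Proof. destruct BX as (_&_&_&_&_&_&_&_&a&_). rewrite -!cA. apply a. Qed.
Lemma mell {A : ob C} : ell (bang B A) = (mK B ⊠ idm (bang B A)) ;; (mm B unit A ;; bmap B (ell A)).
Proof. destruct BX as (_&_&_&_&_&_&_&_&_&a&_). rewrite -!cA. apply a. Qed.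
Lemma mrho {A : ob C} : rho (bang B A) = (idm (bang B A) ⊠ mK B) ;; (mm B A unit ;; bmap B (rho A)).
Proof. destruct BX as (_&_&_&_&_&_&_&_&_&_&a&_). rewrite -!cA. apply a. Qed.
Lemma msym {A D : ob C} : sigma (bang B A) (bang B D) ;; mm B D A = mm B A D ;; bmap B (sigma A D).
Proof. destruct BX as (_&_&_&_&_&_&_&_&_&_&_&a&_). apply a. Qed.
Lemma mdelta {A D : ob C} :
      mm B A D ;; delta B (A ⊗ D)
      = (delta B A ⊠ delta B D) ;; (mm B (bang B A) (bang B D) ;; bmap B (mm B A D)).
Proof. destruct BX as (_&_&_&_&_&_&_&_&_&_&_&_&a&_). rewrite -!cA. apply a. Qed.
Lemma mKdelta : mK B ;; delta B unit = mK B ;; bmap B (mK B).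
Proof. destruct BX as (_&_&_&_&_&_&_&_&_&_&_&_&_&a&_). apply a. Qed.
Lemma meps {A D : ob C} : mm B A D ;; eps B (A ⊗ D) = eps B A ⊠ eps B D.
Proof. destruct BX as (_&_&_&_&_&_&_&_&_&_&_&_&_&_&a&_). apply a. Qed.
Lemma mKeps : mK B ;; eps B unit = idm unit.
Proof. destruct BX as (_&_&_&_&_&_&_&_&_&_&_&_&_&_&_&a). apply a. Qed.

Lemma mnatl {A A' D : ob C} {f : hom A A'} :
  (bmap B f ⊠ idm (bang B D)) ;; mm B A' D = mm B A D ;; bmap B (f ⊠ idm D).
Proof. rewrite -bid mnat. reflexivity. Qed.
Lemma mnatr {A D D' : ob C} {f : hom D D'} :
  (idm (bang B A) ⊠ bmap B f) ;; mm B A D' = mm B A D ;; bmap B (idm A ⊠ f).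
Proof. rewrite -bid mnat. reflexivity. Qed.

Lemma biso {A A' : ob C} {f : hom A A'} {g : hom A' A} : f ;; g = idm A -> bmap B f ;; bmap B g = idm _.
Proof. intros H. rewrite -bcomp H bid. reflexivity. Qed.

Lemma ellm {X : ob C} : ell_inv (bang B X) ;; ((mK B ⊠ idm _) ;; mm B unit X) = bmap B (ell_inv X).
Proof.
  apply (iso_r (bmap B (ell X)) (bmap B (ell_inv X)) _ _ (biso lli)).
  rewrite !cA -mell lil. rewrite -bcomp lil bid. reflexivity.
Qed.
Lemma rhom {X : ob C} : rho_inv (bang B X) ;; ((idm _ ⊠ mK B) ;; mm B X unit) = bmap B (rho_inv X).
Proof.
  apply (iso_r (bmap B (rho X)) (bmap B (rho_inv X)) _ _ (biso rri)).
  rewrite !cA -mrho rir. rewrite -bcomp rir bid. reflexivity.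
Qed.

Lemma m_ainv {A D E : ob C} :
  alpha_inv _ _ _ ;; ((idm (bang B A) ⊠ mm B D E) ;; mm B A (D ⊗ E))
  = (mm B A D ⊠ idm (bang B E)) ;; (mm B (A ⊗ D) E ;; bmap B (alpha_inv A D E)).
Proof.
  apply (iso_l (alpha _ _ _) (alpha_inv _ _ _) _ _ aia).
  rw aai. rewrite idl. rw massoc. rewrite -bcomp aai bid idr. reflexivity.
Qed.

Lemma m_tau {A1 A2 A3 A4 : ob C} :
  (mm B A1 A2 ⊠ mm B A3 A4) ;; (mm B _ _ ;; bmap B (tau C A1 A2 A3 A4))
  = tau C _ _ _ _ ;; ((mm B A1 A3 ⊠ mm B A2 A4) ;; mm B _ _).
Proof.
  rewrite /tau !bcomp ?cA.
  rewrite (@sr _ _ _ _ (mm B A1 A2) (mm B A3 A4)) ?cA.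
  rwr m_ainv. rwr mnatr. rwr mnatr. rwr mnatr. rw ainat3.
  rw tR. rw tR. rw tR. rw tR.
  rewrite (@sr _ _ _ _ (mm B A1 A3) (mm B A2 A4)) ?cA.
  rw anat3. rw massoc. rw tR. rw tR. rw tR. rw tR.
  congr (_ ;; (_ ⊠ _ ;; _)).
  rwr massoc. rwr mnatl. rw tL. rwr msym. rewrite -tL ?cA. rw m_ainv. reflexivity.
Qed.

Section Fdir.
Variables (A : ob C) (w : hom A (bang B A)) (nabla : hom (A ⊗ A) A) (u : hom unit A)
  (Delta : hom A (A ⊗ A)) (e : hom A unit).
Hypothesis Hce : w ;; eps B A = idm A.
Hypothesis Hcd : w ;; delta B A = w ;; bmap B w.
Hypothesis Hn : nabla ;; w = (w ⊠ w) ;; (mm B A A ;; bmap B nabla).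
Hypothesis Hu : u ;; w = mK B ;; bmap B u.
Hypothesis Hd : Delta ;; ((w ⊠ w) ;; mm B A A) = w ;; bmap B Delta.
Hypothesis He : e ;; mK B = w ;; bmap B e.

Definition flam (X : ob C) : hom (A ⊗ bang B X) (bang B (A ⊗ X)) := (w ⊠ idm (bang B X)) ;; mm B A X.

Lemma F_nat : is_natural_lam C B A flam.
Proof.
  intros X Y f. rewrite /flam. rw tf3. rwr mnatr. rw tf2. rewrite idl idr. reflexivity.
Qed.

Lemma F_mu (X : ob C) : mu_nabla C A nabla (bang B X) ;; flam X
      = (idm A ⊠ flam X) ;; flam (A ⊗ X) ;; bmap B (mu_nabla C A nabla X).
Proof.
  rewrite /flam /mu_nabla ?cA. rw tL. rewrite Hn. rewrite -!tL ?cA. rw mnatl. rwr anat. rw massoc.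
  rewrite bcomp. rw x2. rw tf2. reflexivity.
Qed.

Lemma F_eta (X : ob C) : eta_u C A u (bang B X) ;; flam X = bmap B (eta_u C A u X).
Proof.
  rewrite /flam /eta_u ?cA. rw tL. rewrite Hu. rewrite -!tL ?cA. rw mnatl. rw ellm.
  rewrite bcomp. reflexivity.
Qed.

Lemma F_delta (X : ob C) : (idm A ⊠ delta B X) ;; flam (bang B X) ;; bmap B (flam X) = flam X ;; delta B (A ⊗ X).
Proof.
  rewrite /flam ?cA bcomp. rwr mnatl. rw tL. rewrite -Hcd. rw x2. rw mdelta. rw tf4. reflexivity.
Qed.

Lemma F_eps (X : ob C) : flam X ;; eps B (A ⊗ X) = idm A ⊠ eps B X.
Proof.
  rewrite /flam ?cA meps tf4 Hce. reflexivity.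
Qed.

Lemma F_sym1 (X Y : ob C) :
      n_Delta C A Delta (bang B X) (bang B Y) ;; (flam X ⊠ flam Y) ;; mm B (A ⊗ X) (A ⊗ Y)
      = (idm A ⊠ mm B X Y) ;; flam (X ⊗ Y) ;; bmap B (n_Delta C A Delta X Y).
Proof.
  rewrite /flam /n_Delta.
  have TN := @tau_nat A (bang B A) A (bang B A) (bang B X) (bang B X) (bang B Y) (bang B Y) w w (idm _) (idm _).
  have MT := @m_tau A A X Y.
  move: TN MT. generalize (tau C A A (bang B X) (bang B Y)) (tau C (bang B A) (bang B A) (bang B X) (bang B Y)) (tau C A A X Y).
  intros t1 t2 t3 TN MT.
  rewrite ?cA tcomp ?cA. rwr TN. rwr MT.
  rewrite bcomp. rwr mnatl. rewrite tid. rwr tcomp. rwr tcomp. rwr tcomp. rwr tcomp.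
  rewrite !idl !idr. rewrite Hd. reflexivity.
Qed.

Lemma F_sym2 : n_e C A e ;; mK B = (idm A ⊠ mK B) ;; flam unit ;; bmap B (n_e C A e).
Proof.
  rewrite /flam /n_e ?cA He bcomp. rwr xc. rwr mrho. rw rnat. reflexivity.
Qed.

Lemma F_alpha : lam_alpha_compat C B A flam.
Proof.
  intros X Y. rewrite /flam ?cA. rewrite -tL ?cA. rw anat1. rw massoc. rwr xc. reflexivity.
Qed.

End Fdir.

Section Gdir.
Variables (A : ob C) (nabla : hom (A ⊗ A) A) (u : hom unit A)
  (Delta : hom A (A ⊗ A)) (e : hom A unit)
  (lam : forall X : ob C, hom (A ⊗ bang B X) (bang B (A ⊗ X))) (w : hom A (bang B A)).
Hypothesis Hw : rho_inv A ;; ((idm A ⊠ mK B) ;; (lam unit ;; bmap B (rho A))) = w.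
Hypothesis Hnat : is_natural_lam C B A lam.
Hypothesis Hmu : forall X, alpha A A (bang B X) ;; ((nabla ⊠ idm _) ;; lam X)
  = (idm A ⊠ lam X) ;; (lam (A ⊗ X) ;; bmap B (alpha A A X ;; (nabla ⊠ idm X))).
Hypothesis Heta : forall X, ell_inv (bang B X) ;; ((u ⊠ idm _) ;; lam X) = bmap B (ell_inv X ;; (u ⊠ idm X)).
Hypothesis Hdel : forall X, (idm A ⊠ delta B X) ;; (lam (bang B X) ;; bmap B (lam X)) = lam X ;; delta B (A ⊗ X).
Hypothesis Heps : forall X, lam X ;; eps B (A ⊗ X) = idm A ⊠ eps B X.
Hypothesis Hs1 : forall X Y, (Delta ⊠ idm _) ;; (tau C A A (bang B X) (bang B Y) ;; ((lam X ⊠ lam Y) ;; mm B _ _))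
  = (idm A ⊠ mm B X Y) ;; (lam (X ⊗ Y) ;; bmap B ((Delta ⊠ idm _) ;; tau C A A X Y)).
Hypothesis Hs2 : rho A ;; (e ;; mK B) = (idm A ⊠ mK B) ;; (lam unit ;; bmap B (rho A ;; e)).
Hypothesis Hal : forall X Y, alpha A (bang B X) (bang B Y) ;; ((lam X ⊠ idm _) ;; mm B (A ⊗ X) Y)
  = (idm A ⊠ mm B X Y) ;; (lam (X ⊗ Y) ;; bmap B (alpha A X Y)).

Lemma G_L (X : ob C) : lam X = (w ⊠ idm _) ;; mm B A X.
Proof.
  rewrite -Hw. rewrite -!tL ?cA. rw mnatl. rwr tri_inv. rwr anat. rw (Hal _ _). rw tR. rw tR. rw ellm. rw (Hnat _ _ _).
  rwr bcomp. rwr bcomp. rw tri. rw tR. rewrite lil tid bid idr. reflexivity.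
Qed.

Lemma G_ce : w ;; eps B A = idm A.
Proof.
  rewrite -Hw ?cA. rw enat. rw (Heps _). rw tR. rewrite mKeps tid idl rir. reflexivity.
Qed.

Lemma G_cd : w ;; delta B A = w ;; bmap B w.
Proof.
  rewrite -Hw ?cA. rw dnat. rwr (Hdel _). rw tR. rewrite mKdelta. rwr tR. rw (Hnat _ _ _).
  rewrite !bcomp ?cA. rw (biso rri). rewrite idl. reflexivity.
Qed.

Lemma G_e : e ;; mK B = w ;; bmap B e.
Proof.
  rewrite -Hw ?cA. rwr bcomp. rwr Hs2. rw rir. rewrite idl. reflexivity.
Qed.

Lemma G_u : u ;; w = mK B ;; bmap B u.
Proof.
  rewrite -Hw ?cA. rw rinat. rw xc. rewrite -ellKi. rwr linat. rw (Heta _).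
  rwr bcomp. rw rnat. rewrite -ellK. rw lil. rewrite idl. reflexivity.
Qed.

Lemma G_n : nabla ;; w = (w ⊠ w) ;; (mm B A A ;; bmap B nabla).
Proof.
  rewrite -Hw ?cA. rw rinat. rewrite R1inv ?cA. rw xc. rw anat3. rw (Hmu _).
  rwr bcomp. rw rnat. rw R1. rewrite bcomp. rwr (Hnat _ _ _). rw tR. rw tR. rw tR.
  rewrite Hw (G_L A) ?cA. rw x2. reflexivity.
Qed.

Lemma G_D : Delta ;; ((w ⊠ w) ;; mm B A A) = w ;; bmap B Delta.
Proof.
  rewrite -{3}Hw ?cA. rewrite -bcomp -rnat Phi.
  have H1 := Hs1 unit unit.
  have TN := @tau_nat A A A A unit (bang B unit) unit (bang B unit) (idm A) (idm A) (mK B) (mK B).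
  rewrite tid in TN.
  have PH := @Phii A A.
  move: H1 TN PH. generalize (tau C A A unit unit) (tau C A A (bang B unit) (bang B unit)).
  intros t3 t2 H1 TN PH. rewrite ?cA.
  rw xc. rewrite bcomp. rewrite -(@cA _ _ _ _ (Delta ⊠ idm _) t3). rewrite bcomp ?cA.
  rwr (Hnat _ _ _). rewrite -rhom. rw tR. rw rinat. rw x1. rwr tR. rwr tR.
  rwr H1. rwr mnat. rwr xc. rw TN. rwr xc. rwr rinat. rw PH.
  rwr tcomp. rwr tcomp. rwr tcomp. rewrite Hw. reflexivity.
Qed.

End Gdir.

Definition gw (A : ob C) (lam : forall X : ob C, hom (A ⊗ bang B X) (bang B (A ⊗ X))) : hom A (bang B A) :=
  rho_inv A ;; ((idm A ⊠ mK B) ;; (lam unit ;; bmap B (rho A))).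

Lemma GF_w (A : ob C) (w : hom A (bang B A)) : gw A (flam A w) = w.
Proof.
  rewrite /gw /flam ?cA. rwr xc. rwr mrho. rw rnat. rw rir. rewrite idl. reflexivity.
Qed.

End Coh.

Lemma cb_ext (C : SMC) (B : SMComonad C) A w w' n u D e p1 p2 p3 p4 p5 p6 q1 q2 q3 q4 q5 q6 :
  w' = w ->
  Build_CoalgBimonoid C B A w' n u D e q1 q2 q3 q4 q5 q6
  = Build_CoalgBimonoid C B A w n u D e p1 p2 p3 p4 p5 p6.
Proof.
  intros ->.
  rewrite (proof_irrelevance _ q1 p1) (proof_irrelevance _ q2 p2) (proof_irrelevance _ q3 p3)
    (proof_irrelevance _ q4 p4) (proof_irrelevance _ q5 p5) (proof_irrelevance _ q6 p6).
  reflexivity.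
Qed.

Lemma db_ext (C : SMC) (B : SMComonad C) A n u D e lam lam' p1 p2 p3 q1 q2 q3 :
  lam' = lam ->
  Build_DistBimonoid C B A n u D e lam' q1 q2 q3
  = Build_DistBimonoid C B A n u D e lam p1 p2 p3.
Proof.
  intros ->.
  rewrite (proof_irrelevance _ q1 p1) (proof_irrelevance _ q2 p2) (proof_irrelevance _ q3 p3).
  reflexivity.
Qed.

Lemma F_law_x (C : SMC) (B : SMComonad C) (x : CoalgBimonoid B) :
  is_sym_monoidal_mixed_distributive_law C B (cb_ob C B x) (cb_nabla C B x) (cb_unit C B x) (cb_Delta C B x) (cb_counit C B x)
    (flam C B (cb_ob C B x) (cb_coalg C B x)).
Proof.
  destruct x as [A w n u D e [Hce Hcd] Hn Hu HD Hco bim]; simpl.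
  unfold is_coalg_morph, tens_coalg in *. rewrite cA in Hn.
  split; [split; [ | split; [ | split; [ | split]]] | split].
  - apply F_nat.
  - intro X. apply F_mu. exact Hn.
  - intro X. apply F_eta. exact Hu.
  - intro X. apply F_delta. exact Hcd.
  - intro X. apply F_eps. exact Hce.
  - intros X Y. apply F_sym1. exact HD.
  - apply F_sym2. exact Hco.
Qed.

Lemma F_alpha_x (C : SMC) (B : SMComonad C) (x : CoalgBimonoid B) :
  lam_alpha_compat C B (cb_ob C B x) (flam C B (cb_ob C B x) (cb_coalg C B x)).
Proof. apply F_alpha. Qed.

Definition Fmap (C : SMC) (B : SMComonad C) (x : CoalgBimonoid B) : DistBimonoid B :=
  {| db_ob := cb_ob C B x; db_nabla := cb_nabla C B x; db_unit := cb_unit C B x; db_Delta := cb_Delta C B x;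
     db_counit := cb_counit C B x; db_lam := flam C B (cb_ob C B x) (cb_coalg C B x);
     db_bimonoid := cb_bimonoid C B x; db_law := F_law_x C B x; db_alpha := F_alpha_x C B x |}.

Lemma y_hyps (C : SMC) (B : SMComonad C) (A : ob C) n u D e
  (lam : forall X : ob C, hom (A ⊗ bang B X) (bang B (A ⊗ X)))
  (Hl : is_sym_monoidal_mixed_distributive_law C B A n u D e lam)
  (Hal : lam_alpha_compat C B A lam) :
  is_natural_lam C B A lam /\
  (forall X, alpha A A (bang B X) ;; ((n ⊠ idm _) ;; lam X)
     = (idm A ⊠ lam X) ;; (lam (A ⊗ X) ;; bmap B (alpha A A X ;; (n ⊠ idm X)))) /\
  (forall X, ell_inv (bang B X) ;; ((u ⊠ idm _) ;; lam X) = bmap B (ell_inv X ;; (u ⊠ idm X))) /\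
  (forall X, (idm A ⊠ delta B X) ;; (lam (bang B X) ;; bmap B (lam X)) = lam X ;; delta B (A ⊗ X)) /\
  (forall X, lam X ;; eps B (A ⊗ X) = idm A ⊠ eps B X) /\
  (forall X Y, (D ⊠ idm _) ;; (tau C A A (bang B X) (bang B Y) ;; ((lam X ⊠ lam Y) ;; mm B _ _))
     = (idm A ⊠ mm B X Y) ;; (lam (X ⊗ Y) ;; bmap B ((D ⊠ idm _) ;; tau C A A X Y))) /\
  (rho A ;; (e ;; mK B) = (idm A ⊠ mK B) ;; (lam unit ;; bmap B (rho A ;; e))) /\
  (forall X Y, alpha A (bang B X) (bang B Y) ;; ((lam X ⊠ idm _) ;; mm B (A ⊗ X) Y)
     = (idm A ⊠ mm B X Y) ;; (lam (X ⊗ Y) ;; bmap B (alpha A X Y))).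
Proof.
  destruct Hl as [[Hnat [Hmu [Heta [Hdel Heps]]]] [Hs1 Hs2]].
  split; [exact Hnat|]. split.
  { intro X. have E := Hmu X. rewrite /mu_nabla !cA in E. exact E. }
  split.
  { intro X. have E := Heta X. rewrite /eta_u !cA in E. exact E. }
  split.
  { intro X. have E := Hdel X. rewrite !cA in E. exact E. }
  split; [exact Heps|]. split.
  { intros X Y. have E := Hs1 X Y. unfold n_Delta in E. move: E.
    generalize (tau C A A (bang B X) (bang B Y)) (tau C A A X Y). intros t t' E.
    rewrite !cA in E. exact E. }
  split.
  { have E := Hs2. rewrite /n_e !cA in E. exact E. }
  { intros X Y. have E := Hal X Y. rewrite !cA in E. exact E. }
Qed.

Ltac prep_y y :=
  let A := fresh "A" in let lam := fresh "lam" in let Hl := fresh "Hl" in let Ha := fresh "Ha" in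
  destruct y as [A ? ? ? ? lam ? Hl Ha]; simpl;
  destruct (y_hyps _ _ _ _ _ _ _ _ Hl Ha) as (Hnat & Hmu & Heta & Hdel & Heps & Hs1 & Hs2 & Hal).

Lemma G_coalg_y (C : SMC) (B : SMComonad C) (y : DistBimonoid B) :
  is_coalgebra C B (db_ob C B y) (gw C B (db_ob C B y) (db_lam C B y)).
Proof.
  prep_y y. split.
  - eapply G_ce; [reflexivity | eassumption].
  - eapply G_cd; [reflexivity | eassumption | eassumption].
Qed.

Lemma G_morph_y (C : SMC) (B : SMComonad C) (y : DistBimonoid B) :
  let w := gw C B (db_ob C B y) (db_lam C B y) in
  is_coalg_morph C B _ _ (tens_coalg C B _ _ w w) w (db_nabla C B y) /\
  is_coalg_morph C B _ _ (mK B) w (db_unit C B y) /\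
  is_coalg_morph C B _ _ w (tens_coalg C B _ _ w w) (db_Delta C B y) /\
  is_coalg_morph C B _ _ w (mK B) (db_counit C B y).
Proof.
  prep_y y. unfold is_coalg_morph, tens_coalg. split; [|split; [|split]].
  - rewrite cA. eapply G_n; first [reflexivity | eassumption].
  - eapply G_u; first [reflexivity | eassumption].
  - eapply G_D; first [reflexivity | eassumption].
  - eapply G_e; first [reflexivity | eassumption].
Qed.

Definition Gmap (C : SMC) (B : SMComonad C) (y : DistBimonoid B) : CoalgBimonoid B :=
  {| cb_ob := db_ob C B y; cb_coalg := gw C B (db_ob C B y) (db_lam C B y);
     cb_nabla := db_nabla C B y; cb_unit := db_unit C B y; cb_Delta := db_Delta C B y;
     cb_counit := db_counit C B y;
     cb_is_coalg := G_coalg_y C B y;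
     cb_nabla_morph := proj1 (G_morph_y C B y);
     cb_unit_morph := proj1 (proj2 (G_morph_y C B y));
     cb_Delta_morph := proj1 (proj2 (proj2 (G_morph_y C B y)));
     cb_counit_morph := proj2 (proj2 (proj2 (G_morph_y C B y)));
     cb_bimonoid := db_bimonoid C B y |}.

Theorem proposition5p7 (C : SMC) (B : SMComonad C) :
  exists (F : CoalgBimonoid B -> DistBimonoid B) (G : DistBimonoid B -> CoalgBimonoid B),
    (forall x : CoalgBimonoid B, G (F x) = x) /\
    (forall y : DistBimonoid B, F (G y) = y) /\
    (forall x : CoalgBimonoid B, db_underlying (F x) = cb_underlying x).
Proof.
  exists (Fmap C B), (Gmap C B). split; [|split].
  - intros x. destruct x as [A w n u D e p1 p2 p3 p4 p5 p6]. unfold Gmap, Fmap; simpl.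
    apply cb_ext. apply GF_w.
  - intros y. destruct y as [A n u D e lam bim Hl Ha]. unfold Gmap, Fmap; simpl.
    apply db_ext. apply functional_extensionality_dep. intro X.
    destruct (y_hyps _ _ _ _ _ _ _ _ Hl Ha) as (Hnat & Hmu & Heta & Hdel & Heps & Hs1 & Hs2 & Hal).
    symmetry. unfold flam. eapply G_L; first [reflexivity | eassumption].
  - intros x. reflexivity.
Qed.
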